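(* Let $n\ge 2$ and let $X$ be a $\mathcal D$-subspace of $\mathbb P=PG(\mathbb E,\mathbb{F}_q)=PG(n^2-1,q)$. Then there exist two Desarguesian $(n-1)$-spreads $\mathcal D_1(X)$ and $\mathcal D_2(X)$ of $\mathbb P$ such that: (D1) $X\in\mathcal D_i(X)$ and $\mathcal R_i\subset\mathcal D_i(X)$ for $i=1,2$; (D2) for $i=1,2$ there is a linear collineation $\Xi_i$ of $\mathbb P$ fixing $\mathcal D_i(X)$ which induces a semilinear collineation $\tilde\Xi_i$ of order $n$ of $\Pi_{n-1}(\mathcal D_i(X))\cong PG(n-1,q^n)$ whose set of fixed points is exactly $\mathcal R_i$, and $\mathcal R_i$ is a subgeometry of $\Pi_{n-1}(\mathcal D_i(X))$ isomorphic to $PG(n-1,q)$. Moreover there exists an involutory collineation $\Phi$ of $\mathbb P$ such that (D3) $\Phi$ fixes $X$ pointwise, and (D4) $\mathcal D_1(X)^\Phi=\mathcal D_2(X)$.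
   Context: $\mathbb E=\mathrm{End}(\mathbb{F}_{q^n},\mathbb{F}_q)$; $\langle\varphi\rangle_q$ is the point of $\mathbb P$ defined by $\varphi\ne0$; $t_\lambda:x\mapsto\lambda x$. The Segre variety $\mathcal S_{n,n}$ is the set of points $\langle\varphi\rangle_q$ with $\varphi$ of rank 1; its maximal subspaces are $(n-1)$-dimensional and form two systems $\mathcal R_1,\mathcal R_2$, where $\mathcal R_1=\{\{\langle t_\alpha\circ\mathrm{Tr}\circ t_\lambda\rangle_q:\alpha\in\mathbb{F}_{q^n}^*\}:\lambda\in\mathbb{F}_{q^n}^*\}$ and $\mathcal R_2=\{\{\langle t_\lambda\circ\mathrm{Tr}\circ t_\alpha\rangle_q:\alpha\in\mathbb{F}_{q^n}^*\}:\lambda\in\mathbb{F}_{q^n}^*\}$, $\mathrm{Tr}$ the trace $\mathbb{F}_{q^n}\to\mathbb{F}_q$. $H(\mathcal S_{n,n})$ is the subgroup of $PGL(n^2,q)$ fixing each of $\mathcal R_1$ and $\mathcal R_2$. Let $\mathcal I=\{\langle t_\lambda\rangle_q:\lambda\in\mathbb{F}_{q^n}^*\}$, an $(n-1)$-dimensional subspace of $\mathbb P$; a $\mathcal D$-subspace of $\mathbb P$ is any subspace in the orbit of $\mathcal I$ under $H(\mathcal S_{n,n})$. An $(n-1)$-spread of $\mathbb P$ is a partition of its points into $(n-1)$-dimensional subspaces; it is Desarguesian if it arises as the set of subspaces $\{\langle\mathbf v\rangle_{q^n}\}$ viewed over $\mathbb F_q$ when the underlying $\mathbb F_q$-space is endowed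 with an $\mathbb F_{q^n}$-vector space structure. For a Desarguesian $(n-1)$-spread $\mathcal D$ of $\mathbb P$, $\Pi_{n-1}(\mathcal D)$ is the projective space $\cong PG(n-1,q^n)$ whose points are the elements of $\mathcal D$ and whose subspaces are the sets of spread elements contained in subspaces of $\mathbb P$ spanned by spread elements. A subgeometry isomorphic to $PG(n-1,q)$ of $PG(n-1,q^n)$ is the point set defined by an $\mathbb F_q$-subspace of dimension $n$ spanning the underlying $\mathbb F_{q^n}$-space. *)

(* Defs.v *)
From HB Require Import structures.
From mathcomp Require Import all_boot all_order all_algebra all_fingroup all_field.
Set Implicit Arguments. Unset Strict Implicit. Unset Printing Implicit Defensive.
Import GRing.Theory.
Local Open Scope ring_scope.

Section SegreDefs.
Variables (F : finFieldType) (L : fieldExtType F).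

(* E = End(F_{q^n}, F_q) is the F-vector space 'End(L); points of P are
   1-dimensional F-subspaces, projective subspaces are F-subspaces. *)

Definition trL (x : L) : L := \sum_(i < \dim {:L}) x ^+ (#|F| ^ i).

Definition tmul (l : L) : 'End(L) := linfun (fun x : L => l * x).

Definition r1map (a l : L) : 'End(L) := linfun (fun x : L => a * trL (l * x)).
Definition r2map (a l : L) : 'End(L) := linfun (fun x : L => l * trL (a * x)).

Definition isR1 (S : {vspace 'End(L)}) : Prop :=
  exists l : L, l != 0 /\ forall phi, phi \in S <-> exists a : L, phi = r1map a l.
Definition isR2 (S : {vspace 'End(L)}) : Prop :=
  exists l : L, l != 0 /\ forall phi, phi \in S <-> exists a : L, phi = r2map a l.

Definition fixes_system (g : 'End('End(L))) (R : {vspace 'End(L)} -> Prop) :=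
  forall S, R S <-> R (g @: S)%VS.

(* X is a D-subspace: X = I^g with g in H(S_{n,n}) *)
Definition Dsubspace (X : {vspace 'End(L)}) : Prop :=
  exists g : 'End('End(L)),
    lker g = 0%VS /\ fixes_system g isR1 /\ fixes_system g isR2 /\
    forall phi, phi \in X <-> exists l : L, phi = g (tmul l).

Definition isSpread (D : {vspace 'End(L)} -> Prop) : Prop :=
  (forall S, D S -> \dim S = \dim {:L}) /\
  (forall v : 'End(L), v != 0 ->
     exists S, [/\ D S, v \in S & forall S', D S' -> v \in S' -> S' = S]).

Definition LStruct (mu : L -> 'End(L) -> 'End(L)) : Prop :=
  [/\ (forall a u v, mu a (u + v) = mu a u + mu a v),
      (forall a (c : F) v, mu a (c *: v) = c *: mu a v),
      (forall a b v, mu (a + b) v = mu a v + mu b v),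
      (forall a b v, mu (a * b) v = mu a (mu b v)) &
      (forall (c : F) v, mu (c%:A) v = c *: v)].

Definition Lspan (mu : L -> 'End(L) -> 'End(L)) (v : 'End(L))
    (S : {vspace 'End(L)}) : Prop :=
  forall w, w \in S <-> exists a : L, w = mu a v.

Definition DesSpreadVia mu (D : {vspace 'End(L)} -> Prop) : Prop :=
  LStruct mu /\ forall S, D S <-> exists v, v != 0 /\ Lspan mu v S.

Definition Subgeometry mu (R : {vspace 'End(L)} -> Prop) : Prop :=
  exists W : {vspace 'End(L)},
    [/\ \dim W = \dim {:L},
        (forall v, exists s : seq (L * 'End(L)),
            all (fun p => p.2 \in W) s /\ v = \sum_(p <- s) mu p.1 p.2) &
        (forall S, R S <-> exists w, [/\ w \in W, w != 0 & Lspan mu w S])].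

Definition vimg (g : 'End('End(L))) (S : {vspace 'End(L)}) := (g @: S)%VS.

Definition DProps (D R : {vspace 'End(L)} -> Prop) (X : {vspace 'End(L)}) : Prop :=
  exists mu, [/\ DesSpreadVia mu D, isSpread D, D X, (forall S, R S -> D S) &
    exists g : 'End('End(L)),
      [/\ lker g = 0%VS /\
          (forall S, D S -> D (vimg g S)),
          (exists sigma : {rmorphism L -> L}, bijective sigma /\
             forall a v, g (mu a v) = mu (sigma a) (g v)),
          ((forall S, D S -> iter (\dim {:L}) (vimg g) S = S) /\
           (forall k, (0 < k < \dim {:L})%N -> exists S, D S /\ iter k (vimg g) S <> S)),
          (forall S, D S -> (vimg g S = S <-> R S)) &
          Subgeometry mu R]].

Definition Collineation (f : 'End(L) -> 'End(L)) : Prop :=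
  [/\ bijective f, (forall u v, f (u + v) = f u + f v) &
      exists tau : {rmorphism F -> F}, bijective tau /\
        forall (c : F) v, f (c *: v) = tau c *: f v].

(* involutory: f^2 induces the identity on points, f does not *)
Definition Involutory (f : 'End(L) -> 'End(L)) : Prop :=
  (forall v, f (f v) \in <[v]>%VS) /\ (exists v, f v \notin <[v]>%VS).

Definition maps_onto (f : 'End(L) -> 'End(L)) (S T : {vspace 'End(L)}) : Prop :=
  forall w, w \in T <-> exists v, v \in S /\ w = f v.

Definition spread_image f (D1 D2 : {vspace 'End(L)} -> Prop) : Prop :=
  (forall S, D1 S -> exists T, D2 T /\ maps_onto f S T) /\
  (forall T, D2 T -> exists S, D1 S /\ maps_onto f S T).

End SegreDefs.

(* Main.v *)
Require Import Defs.
From HB Require Import structures.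
From mathcomp Require Import all_boot all_order all_algebra all_fingroup all_field.
From mathcomp Require Import zify ring.
From Stdlib Require Import Classical.
Import GRing.Theory.
Local Open Scope ring_scope.

Lemma linfunE' (K: fieldType) (aT rT : vectType K) (f : aT -> rT)
  (hf : forall a u v, f (a *: u + v) = a *: f u + f v) x : linfun f x = f x.
Proof.
pose lf : {linear aT -> rT} := HB.pack f (GRing.isLinear.Build K aT rT _ f hf).
exact: (lfunE lf x).
Qed.

Section Fin.
Variables (F : finFieldType) (L : fieldExtType F).
Local Notation q := #|F|.
Local Notation n := (\dim {:L}).

Lemma q_gt1 : (1 < q)%N. Proof. exact: finNzRing_gt1. Qed.

Lemma n_gt0 : (0 < n)%N.
Proof. by have := adim_gt0 (fullv : {subfield L}). Qed.

Lemma fermat_full (x : L) : x ^+ (q ^ n) = x.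
Proof. by apply/eqP; rewrite -(Fermat's_little_theorem (fullv : {subfield L})) memvf. Qed.

Lemma fermat_one (x : L) : (x \in 1%VS) = (x ^+ q == x).
Proof. by rewrite (Fermat's_little_theorem (1%AS : {subfield L})) /= dimv1 expn1. Qed.

Definition frobL (x : L) := x ^+ q.

Lemma frobL_add : zmod_morphism frobL.
Proof.
rewrite /frobL => x y.
have [p _ pcharFp] := finPcharP F; rewrite (card_pprimeChar pcharFp).
elim: (logn _ _) => // k IHk; rewrite expnSr !exprM {}IHk.
by rewrite -(pchar_lalg L) in pcharFp; rewrite -pFrobenius_autE rmorphB.
Qed.

Lemma frobL_mul : monoid_morphism frobL.
Proof. by rewrite /frobL; split=> [|x y]; rewrite ?exprMn ?expr1n. Qed.

HB.instance Definition _ := GRing.isZmodMorphism.Build L L frobL frobL_add.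
HB.instance Definition _ := GRing.isMonoidMorphism.Build L L frobL frobL_mul.

Lemma frobL_Z : scalable frobL.
Proof.
move=> a x; rewrite -[in LHS]mulr_algl rmorphM /=.
have -> : frobL a%:A = a%:A by apply/eqP; rewrite /frobL -fermat_one memvZ // memv_line.
by rewrite mulr_algl.
Qed.

HB.instance Definition _ := GRing.isScalable.Build F L L *:%R frobL frobL_Z.

Lemma iter_frobL k x : iter k frobL x = x ^+ (q ^ k).
Proof. by elim: k => [|k IH] /=; rewrite ?expr1 // IH /frobL -exprM expnSr. Qed.

Lemma frobL_bij : bijective frobL.
Proof.
have n1 := n_gt0.
exists (fun x => x ^+ (q ^ n.-1)) => x; rewrite /frobL -exprM;
  [|rewrite mulnC]; rewrite -expnS prednK //; exact: fermat_full.
Qed.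

Lemma frobL_inj : injective frobL. Proof. exact: bij_inj frobL_bij. Qed.

Lemma iter_frob_n x : iter n frobL x = x.
Proof. by rewrite iter_frobL fermat_full. Qed.

Lemma trL_iter x : trL x = \sum_(i < n) iter i frobL x.
Proof. by apply: eq_bigr => i _; rewrite iter_frobL. Qed.

Lemma iter_linear k : forall a (u v : L), iter k frobL (a *: u + v) = a *: iter k frobL u + iter k frobL v.
Proof.
elim: k => [//|k IH] a u v /=; rewrite IH rmorphD /=; congr (_ + _).
by rewrite linearZ.
Qed.

Lemma trL_lin a (u v : L) : trL (a *: u + v) = a *: trL u + trL v.
Proof.
rewrite !trL_iter scaler_sumr -big_split /=; apply: eq_bigr => i _; exact: iter_linear.
Qed.

Lemma trL_frob x : frobL (trL x) = trL x.
Proof.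
rewrite trL_iter rmorph_sum /=.
have := n_gt0; case Hn: n => [//|m] _.
rewrite (big_ord_recr m) (big_ord_recl m) /= -iterS -Hn iter_frob_n addrC; congr (_ + _).
Qed.

Lemma trL_one (x : L) : trL x \in 1%VS.
Proof. by rewrite fermat_one; apply/eqP; exact: trL_frob. Qed.


Lemma cardL : #|finvect_type L| = (q ^ n)%N.
Proof. have := card_vspace (fullv : {vspace finvect_type L}).
rewrite (eq_card (B := finvect_type L)) //. move=> x; exact: memvf. Qed.

Lemma nonroot (p : {poly L}) : p != 0 -> (size p <= q ^ n.-1 + 1)%N ->
  exists x, ~~ root p x.
Proof.
move=> p0 sp; apply/not_all_not_ex => /= hall.
have hr : all (root p) (enum (finvect_type L)).
  by apply/allP => x _; have := hall x; case: (root p x).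
have h : (#|finvect_type L| < size p)%N.
  by rewrite cardT; exact: (max_poly_roots p0 hr (enum_uniq _)).
rewrite cardL in h.
have := leq_trans h sp.
have q1 := q_gt1; have n1 := n_gt0.
rewrite -{1}(prednK n1) expnS => h2.
have h3 : (0 < q ^ n.-1)%N by rewrite expn_gt0 (ltnW q1).
have : (2 * q ^ n.-1 <= q * q ^ n.-1)%N by rewrite leq_mul2r q1 orbT.
rewrite mul2n -addnn; lia.
Qed.

Lemma not_fix k : (0 < k < n)%N -> exists x : L, x ^+ (q ^ k) != x.
Proof.
case/andP=> k0 kn.
have q1 := q_gt1.
have [x hx] : exists x : L, ~~ root ('X^(q ^ k) - 'X) x; last first.
  by exists x; move: hx; rewrite /root hornerD hornerN hornerXn hornerX subr_eq0.
apply: nonroot.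
- apply/eqP => /(congr1 (fun p : {poly L} => p`_1)).
  rewrite coefB coefXn coefX coef0 /=.
  have -> : (1 == q ^ k)%N = false.
    by apply/negbTE; rewrite neq_ltn -{1}(expn0 q) ltn_exp2l ?k0.
  by move/eqP; rewrite sub0r oppr_eq0 oner_eq0.
- apply: leq_trans (size_polyD _ _) _; rewrite size_polyN size_polyXn size_polyX.
  rewrite geq_max; apply/andP; split.
    by rewrite addn1 ltnS leq_exp2l // -ltnS prednK // (leq_trans _ kn).
  by rewrite addn1 ltnS expn_gt0 (ltnW q1).
Qed.

Lemma exists_notF : (1 < n)%N -> exists a : L, a \notin 1%VS.
Proof.
move=> n1; have [|a ha] := @not_fix 1; first by rewrite n1.
by exists a; rewrite fermat_one -(expn1 q).
Qed.

Lemma trL_nonzero : exists x0 : L, trL x0 != 0.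
Proof.
have q1 := q_gt1; have n1 := n_gt0.
pose i0 : 'I_n := Ordinal n1.
have [x hx] : exists x : L, ~~ root (\sum_(i < n) 'X^(q ^ i)) x; last first.
  exists x; move: hx; rewrite /root horner_sum trL_iter.
  by under eq_bigr => i _ do rewrite hornerXn -iter_frobL.
apply: nonroot.
- apply/eqP => /(congr1 (fun p : {poly L} => p`_1)).
  rewrite coef_sum (bigD1 i0) //= coefXn expn0 eqxx big1 ?addr0 ?coef0.
    by move/eqP; rewrite oner_eq0.
  move=> i hi; rewrite coefXn.
  have -> : (1 == q ^ i)%N = false; last by [].
  have hi0 : (0 < i)%N.
    by rewrite lt0n; apply: contra hi => /eqP h; apply/eqP/val_inj.
  have : (q ^ 0 < q ^ i)%N by rewrite ltn_exp2l.
  by rewrite expn0 => h; apply/negbTE; rewrite neq_ltn h.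
- apply: (big_ind (fun p : {poly L} => size p <= q ^ n.-1 + 1)%N).
  + by rewrite size_poly0.
  + by move=> p1 p2 h1 h2; apply: leq_trans (size_polyD _ _) _; rewrite geq_max h1 h2.
  + move=> i _; rewrite size_polyXn addn1 ltnS leq_exp2l //.
    by rewrite -ltnS prednK.
Qed.


Local Notation E := 'End(L).

Lemma in1P (x : L) : reflect (exists c : F, x = c%:A) (x \in 1%VS).
Proof. exact: (iffP (vlineP _ _)). Qed.

Lemma tmulE (l x : L) : tmul l x = l * x.
Proof.
by rewrite linfunE' // => a u v; rewrite mulrDr scalerAr.
Qed.


Lemma trL0 : trL (0 : L) = 0.
Proof.
rewrite /trL big1 // => i _; rewrite expr0n.
have -> : (q ^ i == 0)%N = false; last by [].
by apply/negbTE; rewrite -lt0n expn_gt0 (ltnW q_gt1).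
Qed.

Lemma trLD (x y : L) : trL (x + y) = trL x + trL y.
Proof. by have := trL_lin 1 x y; rewrite !scale1r. Qed.

Lemma trLZ (c : F) (x : L) : trL (c *: x) = c *: trL x.
Proof. by have := trL_lin c x 0; rewrite !addr0 trL0 addr0. Qed.

Lemma trL_scal (t y : L) : t \in 1%VS -> trL (t * y) = t * trL y.
Proof. by case/in1P=> c ->; rewrite !mulr_algl trLZ. Qed.

Definition trl (l : L) : E := linfun (fun x : L => trL (l * x)).

Lemma trlE (l x : L) : trl l x = trL (l * x).
Proof.
by rewrite linfunE' // => a u v; rewrite mulrDr -scalerAr trL_lin.
Qed.

Lemma r1mapE (a l x : L) : r1map a l x = a * trL (l * x).
Proof.
rewrite linfunE' // => c u v; rewrite mulrDr -scalerAr trL_lin mulrDr scalerAr //.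
Qed.

Lemma r2mapE (a l x : L) : r2map a l x = l * trL (a * x).
Proof.
rewrite linfunE' // => c u v; rewrite mulrDr -scalerAr trL_lin mulrDr scalerAr //.
Qed.

Lemma r1map_trl (a l : L) : r1map a l = (tmul a \o trl l)%VF.
Proof. by apply/lfunP => x; rewrite comp_lfunE tmulE trlE r1mapE. Qed.

Lemma trl_lin (c : F) (u v : L) : trl (c *: u + v) = c *: trl u + trl v.
Proof.
apply/lfunP => x; rewrite add_lfunE scale_lfunE !trlE.
by rewrite mulrDl -scalerAl trL_lin.
Qed.

Definition Tm : 'Hom(L, E) := linfun trl.
Lemma TmE (l : L) : Tm l = trl l.
Proof. by rewrite linfunE' //; exact: trl_lin. Qed.

Lemma trl_inj (l : L) : trl l = 0 -> l = 0.
Proof.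
move=> h; apply/eqP; apply/negP => /negP l0.
have [x0 hx0] := trL_nonzero.
have := trlE l (l^-1 * x0); rewrite h lfunE /= mulrA mulfV // mul1r => /esym.
by apply/eqP.
Qed.

Lemma trl_injective : injective trl.
Proof.
move=> a b h; apply/eqP; rewrite -subr_eq0; apply/eqP; apply: trl_inj.
have := trl_lin (-1) b a; rewrite h !scaleN1r addNr addrC => <- //.
Qed.

Lemma lker_Tm : lker Tm = 0%VS.
Proof. by apply/eqP/lker0P => a b; rewrite !TmE; exact: trl_injective. Qed.

Definition Wv := limg Tm.

Lemma dim_Wv : \dim Wv = n.
Proof. by rewrite /Wv limg_dim_eq // lker_Tm capv0. Qed.

Lemma trl_one (l x : L) : trl l x \in 1%VS.
Proof. by rewrite trlE trL_one. Qed.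

Lemma functional (f : E) : (forall x, f x \in 1%VS) -> exists l, f = trl l.
Proof.
move=> hf.
pose V := (Wv + <[f]>)%VS.
have allF : forall phi, phi \in V -> forall x, phi x \in 1%VS.
  move=> phi /memv_addP [w hw [g' hg' ->]] x; rewrite add_lfunE; apply: memvD.
    by case/memv_imgP: hw => l _ ->; rewrite TmE trl_one.
  by case/vlineP: hg' => c ->; rewrite scale_lfunE memvZ.
pose e := vbasis (fullv : {vspace L}).
pose Psi : 'Hom(E, L) := linfun (fun phi : E => \sum_(i < n) phi e`_i * e`_i).
have PsiE : forall phi, Psi phi = \sum_(i < n) phi e`_i * e`_i.
  move=> phi; rewrite linfunE' // => c u v; rewrite scaler_sumr -big_split /=.
  by apply: eq_bigr => i _; rewrite add_lfunE scale_lfunE mulrDl scalerAl.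
have capV : (V :&: lker Psi = 0)%VS.
  apply/eqP; rewrite -subv0; apply/subvP => phi; rewrite memv_cap memv_ker.
  case/andP=> hV /eqP hP; rewrite memv0.
  have hc : forall i : 'I_n, exists c : F, phi e`_i = c%:A.
    by move=> i; apply/in1P; exact: allF.
  have [c hc'] := fin_all_exists hc.
  have free_e : free e := basis_free (vbasisP _).
  have c0 : forall i, c i = 0.
    apply: (freeP free_e).
    have -> : \sum_(i < n) c i *: e`_i = Psi phi.
      by rewrite PsiE; apply: eq_bigr => i _; rewrite hc' mulr_algl.
    exact: hP.
  apply/eqP/lfunP => x; rewrite zero_lfunE.
  rewrite (coord_vbasis (memvf x)) linear_sum big1 // => i _.
  by rewrite linearZ /= hc' c0 scale0r scaler0.
have dimV : (\dim V <= n)%N.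
  by rewrite -(limg_dim_eq capV) dimvS // subvf.
have eqV : Wv = V.
  apply/eqP; rewrite eqEdim addvSl /= dim_Wv; exact: dimV.
have : f \in Wv by rewrite eqV; apply: (subvP (addvSr _ _)); exact: memv_line.
by case/memv_imgP=> l _ ->; exists l; rewrite TmE.
Qed.



Definition Dm (mu : L -> E -> E) (S : {vspace E}) : Prop :=
  exists v, v != 0 /\ Lspan mu v S.

Section LS.
Variable mu : L -> E -> E.
Hypothesis hmu : LStruct mu.

Lemma mu_addr a u v : mu a (u + v) = mu a u + mu a v.
Proof. by case: hmu. Qed.
Lemma mu_scal a (c : F) v : mu a (c *: v) = c *: mu a v.
Proof. by case: hmu. Qed.
Lemma mu_addl a b v : mu (a + b) v = mu a v + mu b v.
Proof. by case: hmu. Qed.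
Lemma mu_mul a b v : mu (a * b) v = mu a (mu b v).
Proof. by case: hmu. Qed.
Lemma mu_alg (c : F) v : mu (c%:A) v = c *: v.
Proof. by case: hmu. Qed.

Lemma mu_a0 a : mu a 0 = 0.
Proof. by have := mu_scal a 0 0; rewrite !scale0r. Qed.
Lemma mu_0v v : mu 0 v = 0.
Proof. by have := mu_alg 0 v; rewrite !scale0r. Qed.
Lemma mu_1 v : mu 1 v = v.
Proof. by have := mu_alg 1 v; rewrite !scale1r. Qed.
Lemma mu_inv a v : a != 0 -> mu a^-1 (mu a v) = v.
Proof. by move=> a0; rewrite -mu_mul mulVf // mu_1. Qed.

Lemma mu_linl (c : F) a b v : mu (c *: a + b) v = c *: mu a v + mu b v.
Proof. by rewrite mu_addl -mulr_algl mu_mul mu_alg. Qed.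

Definition Mv v : 'Hom(L, E) := linfun (fun a => mu a v).
Lemma MvE v a : Mv v a = mu a v.
Proof. by rewrite linfunE' // => c a' b; rewrite mu_linl. Qed.

Lemma Lspan_Mv v : Lspan mu v (limg (Mv v)).
Proof.
move=> w; split; first by case/memv_imgP=> a _ ->; exists a; rewrite MvE.
by case=> a ->; rewrite -MvE memv_img ?memvf.
Qed.

Lemma Lspan_uniq {v S T} : Lspan mu v S -> Lspan mu v T -> S = T.
Proof.
move=> hS hT; apply/vspaceP => w; apply/idP/idP.
  by move/hS => [a ->]; apply/hT; exists a.
by move/hT => [a ->]; apply/hS; exists a.
Qed.

Lemma dim_Lspan v S : v != 0 -> Lspan mu v S -> \dim S = n.
Proof.
move=> v0 hS; rewrite (Lspan_uniq hS (Lspan_Mv v)) limg_dim_eq //.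
apply/eqP; rewrite -subv0; apply/subvP => a; rewrite memv_cap memv_ker MvE memv0.
case/andP=> _ /eqP h; apply/negP => /negP a0; move/negP: v0; apply.
by rewrite -(@mu_inv a v a0) h mu_a0.
Qed.

Lemma isSpread_Dm : isSpread (Dm mu).
Proof.
split; first by move=> S [v [v0 hv]]; exact: dim_Lspan hv.
move=> v v0; exists (limg (Mv v)); split.
- by exists v; split => //; exact: Lspan_Mv.
- by apply/Lspan_Mv; exists 1; rewrite mu_1.
- move=> S' [w [w0 hw]] /hw [a ha].
  have a0 : a != 0 by apply: contraNneq v0 => a0; rewrite ha a0 mu_0v.
  apply: (Lspan_uniq _ (Lspan_Mv v)) => x; split.
    by move/hw => [b ->]; exists (b / a); rewrite ha -mu_mul divfK.
  by case=> b ->; apply/hw; exists (b * a); rewrite ha mu_mul.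
Qed.

End LS.

Lemma Lspan_img (sigma : L -> L) (hs : forall b, exists a, b = sigma a)
  (mu mu' : L -> E -> E) (f : 'End(E)) v S :
  (forall a, f (mu a v) = mu' (sigma a) (f v)) ->
  Lspan mu v S -> Lspan mu' (f v) (vimg f S).
Proof.
move=> hf hS w; split.
  by case/memv_imgP => u /hS [a ->] ->; exists (sigma a).
case=> b ->; case: (hs b) => a ->; rewrite -hf; apply: memv_img.
by apply/hS; exists a.
Qed.

Lemma Lspan_ext (mu mu' : L -> E -> E) v S :
  (forall a w, mu a w = mu' a w) -> Lspan mu v S -> Lspan mu' v S.
Proof. by move=> h hS w; rewrite hS; split; case=> a ->; exists a; rewrite h. Qed.

Definition DPv (mu : L -> E -> E) (R : {vspace E} -> Prop) (X : {vspace E}) : Prop :=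
 [/\ LStruct mu, Dm mu X, (forall S, R S -> Dm mu S) &
   exists g : 'End(E),
      [/\ lker g = 0%VS /\ (forall S, Dm mu S -> Dm mu (vimg g S)),
          (exists sigma : {rmorphism L -> L}, bijective sigma /\
             forall a v, g (mu a v) = mu (sigma a) (g v)),
          ((forall S, Dm mu S -> iter n (vimg g) S = S) /\
           (forall k, (0 < k < n)%N -> exists S, Dm mu S /\ iter k (vimg g) S <> S)),
          (forall S, Dm mu S -> (vimg g S = S <-> R S)) &
          Subgeometry mu R]].

Lemma DPv_DProps mu R X : DPv mu R X -> DProps (Dm mu) R X.
Proof.
case=> hL hX hR [g [h1 h2 h3 h4 h5]]; exists mu; split.
- by split => // S; exact: iff_refl.
- exact: isSpread_Dm.
- exact: hX.
- exact: hR.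
- by exists g.
Qed.

Section Transport.
Variables (g h : 'End(E)).
Hypotheses (ghK : forall v, g (h v) = v) (hgK : forall v, h (g v) = v).

Lemma vimg_comp (f1 f2 : 'End(E)) S : vimg (f1 \o f2)%VF S = vimg f1 (vimg f2 S).
Proof. exact: limg_comp. Qed.

Lemma vimg_gh S : vimg g (vimg h S) = S.
Proof.
rewrite -vimg_comp /vimg (_ : (g \o h)%VF = \1%VF) ?lim1g //.
by apply/lfunP => v; rewrite comp_lfunE id_lfunE ghK.
Qed.

Lemma vimg_hg S : vimg h (vimg g S) = S.
Proof.
rewrite -vimg_comp /vimg (_ : (h \o g)%VF = \1%VF) ?lim1g //.
by apply/lfunP => v; rewrite comp_lfunE id_lfunE hgK.
Qed.

Lemma g_neq0 v : v != 0 -> g v != 0.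
Proof. by apply: contraNneq => h0; rewrite -(hgK v) h0 linear0. Qed.
Lemma h_neq0 v : v != 0 -> h v != 0.
Proof. by apply: contraNneq => h0; rewrite -(ghK v) h0 linear0. Qed.

Lemma lker_g : lker g = 0%VS.
Proof. by apply/eqP/lker0P; exact: can_inj hgK. Qed.

Variable mu : L -> E -> E.
Let mg := fun a v => g (mu a (h v)).

Lemma Dm_tr S : Dm mg S <-> Dm mu (vimg h S).
Proof.
split.
  case=> v [v0 hv]; exists (h v); split; first exact: h_neq0.
  apply: (@Lspan_img id (fun b => ex_intro _ b erefl)) hv => // a; by rewrite /mg hgK.
case=> v [v0 hv]; exists (g v); split; first exact: g_neq0.
rewrite -(vimg_gh S); apply: (@Lspan_img id (fun b => ex_intro _ b erefl)) hv => // a.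
by rewrite /mg hgK.
Qed.

Lemma Lspan_trg w S : Lspan mu w S -> Lspan mg (g w) (vimg g S).
Proof. by apply: (@Lspan_img id (fun b => ex_intro _ b erefl)) => // a; rewrite /mg hgK. Qed.

Lemma Lspan_trh w S : Lspan mg w S -> Lspan mu (h w) (vimg h S).
Proof. by apply: (@Lspan_img id (fun b => ex_intro _ b erefl)) => // a; rewrite /mg hgK. Qed.

Lemma LStruct_tr : LStruct mu -> LStruct mg.
Proof.
move=> hmu; rewrite /mg; split.
- by move=> a u v; rewrite linearD /= (@mu_addr mu hmu) linearD.
- by move=> a c v; rewrite linearZ /= (@mu_scal mu hmu) linearZ.
- by move=> a b v; rewrite (@mu_addl mu hmu) linearD.
- by move=> a b v; rewrite (@mu_mul mu hmu) hgK.
- by move=> c v; rewrite (@mu_alg mu hmu) linearZ /= ghK.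
Qed.

Variables (R R' : {vspace E} -> Prop).
Hypothesis hRR : forall S, R' S <-> R (vimg h S).

Lemma iter_tr (Xi : 'End(E)) k S :
  iter k (vimg (g \o Xi \o h)%VF) S = vimg g (iter k (vimg Xi) (vimg h S)).
Proof.
elim: k => [|k IH] /=; first by rewrite vimg_gh.
by rewrite IH !vimg_comp vimg_hg.
Qed.

Lemma DPv_transport X : DPv mu R X -> DPv mg R' (vimg g X).
Proof.
case=> hL hX hR [Xi [[kXi fXi] [sigma [bsig hsig]] [ord1 ord2] fixR [W [dW spW RW]]]].
split.
- exact: LStruct_tr.
- by apply/Dm_tr; rewrite vimg_hg.
- by move=> S /hRR /hR /Dm_tr.
exists (g \o Xi \o h)%VF; split.
- split.
    have injXi : injective Xi by apply/lker0P/eqP.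
    apply/eqP/lker0P => u v; rewrite !comp_lfunE => /(congr1 h); rewrite !hgK.
    move/injXi => /(congr1 g); by rewrite !ghK.
  move=> S /Dm_tr hS; apply/Dm_tr.
  by rewrite !vimg_comp vimg_hg; apply: fXi.
- exists sigma; split => // a v; rewrite /mg !comp_lfunE hgK hsig.
  by rewrite hgK.
- split.
    by move=> S /Dm_tr hS; rewrite iter_tr ord1 // vimg_gh.
  move=> k hk; have [S [hS hne]] := ord2 k hk.
  exists (vimg g S); split; first by apply/Dm_tr; rewrite vimg_hg.
  rewrite iter_tr vimg_hg => /(congr1 (vimg h)); rewrite !vimg_hg; exact: hne.
- move=> S /Dm_tr hS; rewrite hRR -(fixR _ hS) !vimg_comp; split.
    by move=> H; rewrite -{2}H vimg_hg.
  by move=> ->; rewrite vimg_gh.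
- exists (vimg g W); split.
  + by rewrite /vimg limg_dim_eq // lker_g capv0.
  + move=> v; have [s [hs hv]] := spW (h v).
    exists [seq (p.1, g p.2) | p <- s]; split.
      by rewrite all_map; apply/allP => p ps /=; rewrite memv_img // (allP hs).
    rewrite -{1}(ghK v) hv linear_sum big_map; apply: eq_bigr => p _.
    by rewrite /mg /= hgK.
  + move=> S; rewrite hRR RW; split.
      case=> w [wW w0 hw]; exists (g w); split.
      * exact: memv_img.
      * exact: g_neq0.
      * by rewrite -(vimg_gh S); exact: Lspan_trg.
    case=> w [/memv_imgP [w' w'W ->] w0 hw]; exists w'; split => //.
      by apply: contraNneq w0 => ->; rewrite linear0.
    by rewrite -(hgK w'); exact: Lspan_trh.
Qed.

End Transport.

Local Notation fr := frobL.

Definition mu1 (a : L) (v : E) : E := (tmul a \o v)%VF.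

Lemma tmul_lin (c : F) (a b : L) : tmul (c *: a + b) = c *: tmul a + tmul b.
Proof.
by apply/lfunP => x; rewrite add_lfunE scale_lfunE !tmulE mulrDl scalerAl.
Qed.

Lemma tmul_add (a b : L) : tmul (a + b) = tmul a + tmul b.
Proof. by have := tmul_lin 1 a b; rewrite !scale1r. Qed.

Lemma tmul_mul (a b : L) : tmul (a * b) = (tmul a \o tmul b)%VF.
Proof. by apply/lfunP => x; rewrite comp_lfunE !tmulE mulrA. Qed.

Lemma tmul_alg (c : F) : tmul (c%:A : L) = c *: \1%VF.
Proof. by apply/lfunP => x; rewrite scale_lfunE id_lfunE tmulE mulr_algl. Qed.

Lemma tmul1 : tmul (1 : L) = \1%VF.
Proof. by apply/lfunP => x; rewrite tmulE mul1r id_lfunE. Qed.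

Lemma LStruct_mu1 : LStruct mu1.
Proof.
rewrite /mu1; split.
- by move=> a u v; rewrite comp_lfunDr.
- by move=> a c v; rewrite -comp_lfunZr.
- by move=> a b v; rewrite tmul_add comp_lfunDl.
- by move=> a b v; rewrite tmul_mul comp_lfunA.
- by move=> c v; rewrite tmul_alg -comp_lfunZl comp_lfun1l.
Qed.

Definition Tmul : 'Hom(L, E) := linfun (@tmul F L).
Lemma TmulE a : Tmul a = tmul a.
Proof. by rewrite linfunE' //; exact: tmul_lin. Qed.

Definition Iv := limg Tmul.

Lemma Iv_Lspan : Lspan mu1 \1%VF Iv.
Proof.
move=> w; split; first by case/memv_imgP => a _ ->; exists a; rewrite TmulE /mu1 comp_lfun1r.
by case=> a ->; rewrite /mu1 comp_lfun1r -TmulE memv_img ?memvf.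
Qed.

Lemma lfun_neq0 (v : E) : v != 0 -> exists x, v x != 0.
Proof.
move=> v0; apply/not_all_not_ex => h; move/negP: v0; apply; apply/eqP/lfunP => x.
by rewrite zero_lfunE; have := h x; case: eqP.
Qed.

Lemma trl0 : trl 0 = 0.
Proof. by apply/lfunP => x; rewrite trlE mul0r trL0 zero_lfunE. Qed.

Lemma trl_neq0 l : l != 0 -> trl l != 0.
Proof. by apply: contraNneq => /trl_inj ->. Qed.

Lemma Lspan_R1 l (S : {vspace E}) : (forall phi, phi \in S <-> exists a, phi = r1map a l) ->
  Lspan mu1 (trl l) S.
Proof.
move=> h w; rewrite h; split; case=> a ->; exists a; by rewrite r1map_trl.
Qed.

Definition frobl : E := linfun fr.
Lemma froblE x : frobl x = fr x. Proof. by rewrite lfunE. Qed.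

Definition Xi1 : 'End(E) := linfun (fun v : E => (frobl \o v)%VF).
Lemma Xi1E v : Xi1 v = (frobl \o v)%VF.
Proof. by rewrite linfunE' // => c u w; rewrite comp_lfunDr comp_lfunZr. Qed.

Lemma iter_Xi1 k v x : iter k Xi1 v x = iter k fr (v x).
Proof. by elim: k => [//|k IH] /=; rewrite Xi1E comp_lfunE froblE IH. Qed.

Lemma Xi1_mu1 a v : Xi1 (mu1 a v) = mu1 (fr a) (Xi1 v).
Proof.
apply/lfunP => x; rewrite Xi1E /mu1 !comp_lfunE Xi1E comp_lfunE !tmulE !froblE. exact: rmorphM.
Qed.

Lemma fr_surj b : exists a, b = fr a.
Proof. by case: (frobL_bij) => g _ gK; exists (g b); rewrite gK. Qed.

Lemma Xi1_r1map a l : Xi1 (r1map a l) = r1map (fr a) l.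
Proof.
apply/lfunP => x; rewrite Xi1E comp_lfunE froblE !r1mapE rmorphM /=.
by rewrite trL_frob.
Qed.

Lemma Lspan_iter k v S : Lspan mu1 v S -> Lspan mu1 (iter k Xi1 v) (iter k (vimg Xi1) S).
Proof.
elim: k => [//|k IH] hS /=; apply: (@Lspan_img fr fr_surj mu1 mu1).
  by move=> a; rewrite Xi1_mu1.
exact: IH.
Qed.

Lemma id_neq0 : \1%VF != 0 :> E.
Proof. by apply/eqP => /lfunP /(_ 1); rewrite id_lfunE zero_lfunE; apply/eqP; exact: oner_neq0. Qed.

Lemma DPv_std : DPv mu1 (@isR1 F L) Iv.
Proof.
have hL := LStruct_mu1.
split => //.
- by exists \1%VF; split; [exact: id_neq0 | exact: Iv_Lspan].
- move=> S [l [l0 hl]]; exists (trl l); split; first exact: trl_neq0.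
  exact: Lspan_R1.
exists Xi1; split.
- split.
    apply/eqP/lker0P => u v; rewrite !Xi1E => h; apply/lfunP => x.
    by have := congr1 (fun f : E => f x) h; rewrite !comp_lfunE !froblE => /(frobL_inj).
  move=> S [v [v0 hv]]; exists (Xi1 v); split.
    apply: contraNneq v0 => h; apply/eqP/lfunP => x.
    have := congr1 (fun f : E => f x) h; rewrite Xi1E comp_lfunE froblE zero_lfunE.
    by move/eqP; rewrite fmorph_eq0 => /eqP.
  exact: (@Lspan_iter 1 _ _ hv).
- exists fr; split; first exact: frobL_bij.
  by move=> a v; rewrite Xi1_mu1.
- split.
    move=> S [v [v0 hv]]; have := @Lspan_iter n _ _ hv.
    rewrite (_ : iter n Xi1 v = v); first by move/(@Lspan_uniq mu1 _ _ _ hv) => hh; rewrite -hh.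
    by apply/lfunP => x; rewrite iter_Xi1 iter_frob_n.
  move=> k hk; exists Iv; split.
    by exists \1%VF; split; [exact: id_neq0 | exact: Iv_Lspan].
  move=> heq; have [x hx] := @not_fix k hk.
  have := @Lspan_iter k _ _ Iv_Lspan; rewrite heq => hI.
  have : iter k Xi1 \1%VF \in Iv by apply/hI; exists 1; rewrite (@mu_1 mu1 hL).
  case/Iv_Lspan => c hc.
  have hc1 := congr1 (fun f : E => f 1) hc; have hcx := congr1 (fun f : E => f x) hc.
  move: hc1 hcx; rewrite !iter_Xi1 /mu1 !comp_lfunE !id_lfunE !tmulE mulr1 !iter_frobL expr1n.
  by move=> <-; rewrite mul1r => /eqP; rewrite (negbTE hx).
- move=> S [v [v0 hv]]; split.
  + move=> hfix.
    have : Xi1 v \in S.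
      by rewrite -hfix /vimg memv_img //; apply/hv; exists 1; rewrite (@mu_1 mu1 hL).
    case/hv => c hc.
    have hcx : forall x, fr (v x) = c * v x.
      by move=> x; have := congr1 (fun f : E => f x) hc; rewrite Xi1E /mu1 !comp_lfunE froblE tmulE.
    have [x0 hx0] := @lfun_neq0 v v0; set d := v x0 in hx0.
    pose f := (tmul d^-1 \o v)%VF.
    have hf : forall x, f x \in 1%VS.
      move=> x; rewrite fermat_one /f comp_lfunE tmulE; apply/eqP.
      have hx : v x ^+ q = c * v x := hcx x.
      have hd : d ^+ q = c * d := hcx x0.
      have c0 : c != 0.
        apply: contraNneq hx0 => c0; move: hd; rewrite c0 mul0r => /eqP.
        by rewrite expf_eq0 => /andP [_ ->].
      rewrite exprMn exprVn hx hd; field.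
      by rewrite c0 hx0.
    have [l hl] := @functional f hf.
    have vE : v = (tmul d \o trl l)%VF.
      by rewrite -hl /f comp_lfunA -tmul_mul mulfV // tmul1 comp_lfun1l.
    have l0 : l != 0 by apply: contraNneq v0 => l0; rewrite vE l0 trl0 comp_lfun0r.
    exists l; split => // phi; rewrite hv; split.
      by case=> a ->; exists (a * d); rewrite r1map_trl /mu1 vE comp_lfunA tmul_mul.
    case=> b ->; exists (b / d); rewrite r1map_trl /mu1 vE comp_lfunA -tmul_mul divfK //.
  + case=> l [l0 hl]; apply/vspaceP => w; apply/idP/idP.
      case/memv_imgP => u /hl [a ->] ->; apply/hl; exists (fr a); exact: Xi1_r1map.
    move/hl => [b ->]; case: (fr_surj b) => a ->; rewrite -Xi1_r1map memv_img //.
    by apply/hl; exists a.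
- exists Wv; split.
  + exact: dim_Wv.
  + move=> v.
    pose e := vbasis (fullv : {vspace L}).
    have hfi : forall i : 'I_n, exists l, linfun (fun x : L => (coord e i (v x))%:A) = trl l.
      move=> i; apply: functional => x.
      rewrite linfunE'; first by rewrite rpredZ // memv_line.
      by move=> c a b; rewrite linearP /= linearP /= scalerDl scalerA.
    have [l hl] := fin_all_exists hfi.
    exists (map (fun i : 'I_n => (e`_i, trl (l i))) (index_enum 'I_n)); split.
      by rewrite all_map; apply/allP => i _ /=; rewrite -TmE memv_img ?memvf.
    rewrite big_map; apply/lfunP => x; rewrite sum_lfunE.
    rewrite {1}(coord_vbasis (memvf (v x))); apply: eq_bigr => i _ /=.
    rewrite /mu1 comp_lfunE tmulE -hl linfunE'.
      by rewrite mulr_algr.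
    by move=> c a b; rewrite linearP /= linearP /= scalerDl scalerA.
  + move=> S; split.
      case=> l [l0 hl]; exists (trl l); split.
      * by rewrite -TmE memv_img ?memvf.
      * exact: trl_neq0.
      * exact: Lspan_R1.
    case=> w [/memv_imgP [l _ ->] w0 hw]; rewrite TmE in w0 hw; exists l; split.
      by apply: contraNneq w0 => ->; rewrite trl0.
    by move=> phi; rewrite hw; split; case=> a ->; exists a; rewrite r1map_trl.
Qed.


Lemma mem_vimg_inv (g h : 'End(E)) (ghK : forall v, g (h v) = v)
  (hgK : forall v, h (g v) = v) u S : (u \in vimg h S) = (g u \in S).
Proof.
apply/idP/idP; first by case/memv_imgP => w wS ->; rewrite ghK.
by move=> hu; rewrite -(hgK u) memv_img.
Qed.

Lemma adj_ex (phi : E) (y : L) : exists l, (trl y \o phi)%VF == trl l.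
Proof.
have [l hl] : exists l, (trl y \o phi)%VF = trl l.
  by apply: functional => x; rewrite comp_lfunE trl_one.
by exists l; rewrite hl.
Qed.

Definition adjv (phi : E) (y : L) : L := xchoose (adj_ex phi y).

Lemma adjvP (phi : E) (y : L) : trl (adjv phi y) = (trl y \o phi)%VF.
Proof. by have /eqP := xchooseP (adj_ex phi y). Qed.

Lemma adjv_lin (phi : E) (c : F) (a b : L) : adjv phi (c *: a + b) = c *: adjv phi a + adjv phi b.
Proof.
apply: trl_injective; rewrite trl_lin !adjvP trl_lin.
by rewrite comp_lfunDl comp_lfunZl.
Qed.

Definition adjl (phi : E) : E := linfun (adjv phi).
Lemma adjlE (phi : E) (y : L) : adjl phi y = adjv phi y.
Proof. by rewrite linfunE' //; exact: adjv_lin. Qed.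

Lemma adjl_lin (c : F) (phi psi : E) : adjl (c *: phi + psi) = c *: adjl phi + adjl psi.
Proof.
apply/lfunP => y; rewrite add_lfunE scale_lfunE !adjlE.
apply: trl_injective; rewrite trl_lin !adjvP.
by rewrite comp_lfunDr comp_lfunZr.
Qed.

Definition Tp : 'End(E) := linfun adjl.
Lemma TpE (phi : E) : Tp phi = adjl phi.
Proof. by rewrite linfunE' //; exact: adjl_lin. Qed.

Lemma Tp_key (phi : E) (x y : L) : trL (Tp phi y * x) = trL (y * phi x).
Proof.
have := congr1 (fun f : E => f x) (adjvP phi y).
by rewrite trlE comp_lfunE trlE TpE adjlE.
Qed.

Lemma Tp_uniq (phi psi : E) : (forall x y, trL (psi y * x) = trL (y * phi x)) -> Tp phi = psi.
Proof.
move=> h; apply/lfunP => y; apply: trl_injective; apply/lfunP => x.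
by rewrite !trlE Tp_key h.
Qed.

Lemma TpK (phi : E) : Tp (Tp phi) = phi.
Proof. by apply: Tp_uniq => x y; rewrite [y * _]mulrC Tp_key mulrC. Qed.

Lemma Tp_tmul (a : L) : Tp (tmul a) = tmul a.
Proof. by apply: Tp_uniq => x y; rewrite !tmulE mulrA [y * a]mulrC. Qed.

Lemma Tp_mu1 (a : L) (phi : E) : Tp (mu1 a phi) = (Tp phi \o tmul a)%VF.
Proof.
by apply: Tp_uniq => x y; rewrite comp_lfunE tmulE Tp_key /mu1 comp_lfunE tmulE mulrA [y * a]mulrC.
Qed.

Lemma Tp_r1 (a l : L) : Tp (r1map a l) = r2map a l.
Proof.
apply: Tp_uniq => x y; rewrite r1mapE r2mapE.
have e1 : l * trL (a * y) * x = trL (a * y) * (l * x) by ring.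
have e2 : y * (a * trL (l * x)) = trL (l * x) * (a * y) by ring.
by rewrite e1 e2 (trL_scal _ _ (trL_one (a * y))) (trL_scal _ _ (trL_one (l * x))) mulrC.
Qed.

Lemma Tp_r2 (a l : L) : Tp (r2map a l) = r1map a l.
Proof. by rewrite -Tp_r1 TpK. Qed.

Lemma R21 (S : {vspace E}) : isR2 S <-> isR1 (vimg Tp S).
Proof.
split.
  case=> l [l0 hl]; exists l; split => // phi; rewrite (@mem_vimg_inv Tp Tp TpK TpK) hl.
  by split; case=> a h; exists a; [rewrite -Tp_r2 -h TpK | rewrite h Tp_r1].
case=> l [l0 hl]; exists l; split => // phi.
rewrite -[phi in phi \in S]TpK -(@mem_vimg_inv Tp Tp TpK TpK) hl.
by split; case=> a h; exists a; [rewrite -Tp_r1 -h TpK | rewrite h Tp_r2].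
Qed.

Lemma Iv_mem (w : E) : (w \in Iv) <-> exists a, w = tmul a.
Proof.
rewrite Iv_Lspan; split; case=> a ->; exists a; by rewrite /mu1 comp_lfun1r.
Qed.

Lemma Tp_Iv : vimg Tp Iv = Iv.
Proof.
apply/vspaceP => w; rewrite (@mem_vimg_inv Tp Tp TpK TpK); apply/idP/idP.
  by case/Iv_mem => a h; apply/Iv_mem; exists a; rewrite -(TpK w) h Tp_tmul.
by case/Iv_mem => a ->; apply/Iv_mem; exists a; rewrite Tp_tmul.
Qed.

Definition mu2 := fun a v => Tp (mu1 a (Tp v)).

Lemma DPv_std2 : DPv mu2 (@isR2 F L) Iv.
Proof.
rewrite -Tp_Iv; apply: (@DPv_transport Tp Tp TpK TpK) => //.
  exact: R21.
exact: DPv_std.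
Qed.

Lemma frob_alg (c : F) : fr (c%:A : L) = c%:A.
Proof. by apply/eqP; rewrite /frobL -fermat_one rpredZ // memv_line. Qed.

Lemma Tp_not_line : (1 < n)%N -> exists phi, Tp phi \notin <[phi]>%VS.
Proof.
move=> n1; have [a ha] := exists_notF n1.
exists (r1map a 1); rewrite Tp_r1; apply/negP => /vlineP [k hk].
have hy : forall y, trL (a * y) = k%:A * a * trL y.
  move=> y; have := congr1 (fun f : E => f y) hk.
  by rewrite scale_lfunE r2mapE r1mapE !mul1r => ->; rewrite -mulrA mulr_algl.
have [x0 hx0] := trL_nonzero.
case: (eqVneq k 0) => [k0 | k0].
  move: ha; rewrite (_ : a = 0) ?rpred0 //; apply: trl_inj; apply/lfunP => y.
  by rewrite trlE hy k0 scale0r !mul0r zero_lfunE.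
have kA0 : (k%:A : L) != 0 by rewrite scaler_eq0 (negbTE k0) oner_eq0.
have aE : a = trL (a * x0) / (k%:A * trL x0).
  by rewrite hy; field; rewrite kA0 hx0.
move/negP: ha; apply; rewrite fermat_one; apply/eqP.
rewrite -/(frobL a); transitivity (fr (trL (a * x0) / (k%:A * trL x0))).
  by rewrite -aE.
by rewrite rmorphM /= fmorphV rmorphM /= !trL_frob frob_alg -aE.
Qed.

End Fin.

Theorem theorem5p2 (F : finFieldType) (L : fieldExtType F) (n : nat)
    (hL : \dim {:L} = n) (hn : (2 <= n)%N)
    (X : {vspace 'End(L)}) (hX : Dsubspace X) :
  exists D1 D2 : {vspace 'End(L)} -> Prop,
    [/\ DProps D1 (@isR1 F L) X, DProps D2 (@isR2 F L) X &
      exists Phi : 'End(L) -> 'End(L),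
        [/\ Collineation Phi, Involutory Phi,
            (forall v, v \in X -> Phi v \in <[v]>%VS) &
            spread_image Phi D1 D2]].
Proof.
subst n.
case: hX => g [kg [f1 [f2 hXg]]].
have kg' : lker g == 0%VS by apply/eqP.
pose h := (g^-1)%VF.
have hgK : forall v, h (g v) = v := lker0_lfunK kg'.
have ghK : forall v, g (h v) = v := lker0_lfunVK kg'.
have XE : X = vimg g (Iv F L).
  apply/vspaceP => w; apply/idP/idP.
    by case/hXg => l ->; apply: memv_img; apply/Iv_mem; exists l.
  by case/memv_imgP => u /Iv_mem [l ->] ->; apply/hXg; exists l.
have hgh : forall S, vimg g (vimg h S) = S := @vimg_gh F L g h ghK.
have hR : forall (R : {vspace 'End(L)} -> Prop), fixes_system g R ->
    forall S, R S <-> R (vimg h S).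
  move=> R fR S; split => H.
    by apply/fR; rewrite -/(vimg g (vimg h S)) hgh.
  by move/fR: H; rewrite -/(vimg g (vimg h S)) hgh.
have D1P := @DPv_transport F L g h ghK hgK (@mu1 F L) _ _ (hR _ f1) _ (DPv_std F L).
have D2P := @DPv_transport F L g h ghK hgK (@mu2 F L) _ _ (hR _ f2) _ (DPv_std2 F L).
set mg1 := (fun (a : L) (v : 'End(L)) => g (mu1 F L a (h v))) in D1P.
set mg2 := (fun (a : L) (v : 'End(L)) => g (mu2 F L a (h v))) in D2P.
exists (Dm F L mg1), (Dm F L mg2); split; first by rewrite XE; exact: DPv_DProps.
  by rewrite XE; exact: DPv_DProps.
pose P : 'End('End(L)) := (g \o Tp F L \o h)%VF.
have PE : forall v, P v = g (Tp F L (h v)) by move=> v; rewrite !comp_lfunE.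
have PK : forall v, P (P v) = v by move=> v; rewrite !PE hgK TpK ghK.
have P0 : forall v, v != 0 -> P v != 0.
  by move=> v v0; apply: contraNneq v0 => h0; rewrite -(PK v) h0 linear0.
exists (fun_of_lfun P); split.
- split.
  + by exists (fun_of_lfun P) => v; exact: PK.
  + by move=> u v; rewrite linearD.
  + exists (idfun : {rmorphism F -> F}); split; first by exists idfun.
    by move=> c v; rewrite linearZ.
- split; first by move=> v; rewrite PK memv_line.
  have [phi hphi] := @Tp_not_line F L (leq_trans (isT : (1 < 2)%N) hn).
  exists (g phi); rewrite PE hgK; apply/negP => /vlineP [k hk]; move/negP: hphi; apply.
  apply/vlineP; exists k; have := congr1 h hk; rewrite hgK linearZ /= hgK; done.
- rewrite XE => v /memv_imgP [u /Iv_mem [l ->] ->].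
  by rewrite PE hgK Tp_tmul memv_line.
- split.
  + move=> S [v [v0 hv]]; exists (vimg P S); split.
      exists (P v); split; first exact: P0.
      apply: (@Lspan_img F L id (fun b => ex_intro _ b erefl) mg1) hv => a.
      by rewrite /mg1 /mg2 !PE !hgK /mu2 TpK.
    by move=> w; split; [case/memv_imgP => u uS ->; exists u | case=> u [uS ->]; exact: memv_img].
  + move=> T [w [w0 hw]]; exists (vimg P T); split.
      exists (P w); split; first exact: P0.
      apply: (@Lspan_img F L id (fun b => ex_intro _ b erefl) mg2) hw => a.
      by rewrite /mg1 /mg2 !PE !hgK /mu2 TpK.
    move=> w'; rewrite -{1}(@vimg_gh F L P P PK T); split.
      by case/memv_imgP => u uS ->; exists u.
    by case=> u [uS ->]; exact: memv_img.
Qed.
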